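(* Let $\cdot:H\otimes B\to B$ be a symmetric partial action of $H$ on a unital algebra $B$, and let $\overline B$ be its globalization (the standard dilation of $B$). Then the standard dilation of the partial $H$-module $\underline{B\# H}$ is isomorphic, as a left $H$-module, to a direct summand of the smash product $\overline B\# H$. Here $\overline B\# H$ is regarded as a left $H$-module via $h\triangleright(f\# k)=(h_{(1)}\triangleright f)\# h_{(2)}k$.
   Context: Throughout, $k$ is a field and $H$ is a Hopf algebra over $k$ with bijective antipode $S$ and Sweedler notation $\Delta(h)=h_{(1)}\otimes h_{(2)}$. A symmetric partial action of $H$ on a unital algebra $B$ is a linear map $h\otimes b\mapsto h\cdot b$ such that for all $h,k\in H$, $a,b\in B$: - $1_H\cdot a=a$; - $h\cdot(ab)=(h_{(1)}\cdot a)(h_{(2)}\cdot b)$; - $h\cdot(k\cdot a)=(h_{(1)}\cdot1_B)(h_{(2)}k\cdot a)$; - $h\cdot(k\cdot a)=(h_{(1)}k\cdot a)(h_{(2)}\cdot1_B)$. A partial $H$-module is a vector space $M$ with linear $\pi:H\to\mathrm{End}_k(M)$ satisfying, for all $h,k$: - $\pi(1_H)=\mathrm{id}$; - $\pi(h)\pi(k_{(1)})\pi(S(k_{(2)}))=\pi(hk_{(1)})\pi(S(k_{(2)}))$; - $\pi(h_{(1)})\pi(S(h_{(2)}))\pi(k)=\pi(h_{(1)})\pi(S(h_{(2)})k)$; - $\pi(h)\pi(S(k_{(1)}))\pi(k_{(2)})=\pi(hS(k_{(1)}))\pi(k_{(2)})$; - $\pi(S(h_{(1)}))\pi(h_{(2)})\pi(k)=\pi(S(h_{(1)}))\pi(h_{(2)}k)$.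 Standard dilation of $(M,\pi)$: $\operatorname{Hom}_k(H,M)$ is a left $H$-module via $(h\triangleright f)(k)=f(kh)$, $\varphi(m)(h)=\pi(h)(m)$, and $\overline M=H\triangleright\varphi(M)$ is the $H$-submodule generated by $\varphi(M)$. For $M=B$ with $\pi(h)(b)=h\cdot b$, this gives $\overline B$, an $H$-module algebra under convolution $(f*g)(k)=f(k_{(1)})g(k_{(2)})$. $B\otimes H$ is a partial $H$-module via $h\cdot(b\otimes k)=(h_{(1)}\cdot b)\otimes h_{(2)}k$. The partial smash product $\underline{B\# H}$ is the subspace of $B\otimes H$ spanned by $b\# h:=b(h_{(1)}\cdot1_B)\otimes h_{(2)}$. It is a partial $H$-submodule (in fact a direct summand) of $B\otimes H$. $\overline B\# H$ denotes $\overline B\otimes H$ with product $(f\# h)(g\# k)=f*(h_{(1)}\triangleright g)\# h_{(2)}k$. *)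

(* Defs.v *)
From HB Require Import structures.
From mathcomp Require Import all_boot all_algebra.
Set Implicit Arguments.
Unset Strict Implicit.
Unset Printing Implicit Defensive.
Import GRing.Theory.
Local Open Scope ring_scope.

Section Multilinear.
Variable k : fieldType.

Definition klinear (U V : lmodType k) (f : U -> V) : Prop :=
  forall (a : k) (x y : U), f (a *: x + y) = a *: f x + f y.

Definition kbilinear (U V W : lmodType k) (f : U -> V -> W) : Prop :=
  (forall y, klinear (fun x => f x y)) /\ (forall x, klinear (f x)).

Definition ktrilinear (U V W X : lmodType k) (f : U -> V -> W -> X) : Prop :=
  (forall y z, klinear (fun x => f x y z)) /\
  (forall x z, klinear (fun y => f x y z)) /\
  (forall x y, klinear (f x y)).
End Multilinear.

Fixpoint allProp (T : Type) (P : T -> Prop) (s : seq T) : Prop :=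
  if s is x :: s' then P x /\ allProp P s' else True.

(* The comultiplication is given by a function  cop : H -> seq (H*H)   *)
(* choosing, for each h, a finite representation                       *)
(*      Delta(h) = sum_{(a,b) in cop h} a (x) b   in H (x) H.          *)
(* An element of H (x) H is determined by its pairings with all        *)
(* bilinear maps (universal property), so every axiom is stated via    *)
(* the Sweedler sums  sw cop h beta = sum beta(h_(1), h_(2)).          *)
Section Hopf.
Variables (k : fieldType) (H : algType k).

Definition sw (cop : H -> seq (H * H)) (V : zmodType) (h : H)
  (beta : H -> H -> V) : V := \sum_(p <- cop h) beta p.1 p.2.

Record is_hopf (cop : H -> seq (H * H)) (cou : H -> k) (S : H -> H) : Prop := {
  cop_linear : forall (U : lmodType k) (beta : H -> H -> U),
     kbilinear beta -> klinear (fun h => sw cop h beta);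
  cop_coassoc : forall (U : lmodType k) (g : H -> H -> H -> U), ktrilinear g ->
     forall h, sw cop h (fun a b => sw cop a (fun c d => g c d b))
             = sw cop h (fun a b => sw cop b (fun c d => g a c d));
  cou_linear : klinear (cou : H -> k^o);
  cou_left  : forall h, sw cop h (fun a b => cou a *: b) = h;
  cou_right : forall h, sw cop h (fun a b => cou b *: a) = h;
  cop_mul : forall (U : lmodType k) (beta : H -> H -> U), kbilinear beta ->
     forall g h, sw cop (g * h) beta
               = sw cop g (fun a b => sw cop h (fun c d => beta (a * c) (b * d)));
  cop_one : forall (U : lmodType k) (beta : H -> H -> U), kbilinear beta ->
     sw cop 1 beta = beta 1 1;
  cou_mul : forall g h, cou (g * h) = cou g * cou h;
  cou_one : cou 1 = 1;
  antip_linear : klinear S;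
  antip_left  : forall h, sw cop h (fun a b => S a * b) = cou h *: 1;
  antip_right : forall h, sw cop h (fun a b => a * S b) = cou h *: 1;
  antip_bij : bijective S
}.

Definition lmf (l : {linear H -> k^o}) (c : H) : H -> k^o := fun x => l (c * x).
Lemma lmf_lin l c : linear (lmf l c).
Proof. by move=> a x y; rewrite /lmf mulrDr -scalerAr linearP. Qed.
HB.instance Definition _ l c :=
  GRing.isLinear.Build k H k^o *:%R (lmf l c) (lmf_lin l c).
End Hopf.

Section PartialAction.
Variables (k : fieldType) (H B : algType k) (cop : H -> seq (H * H)).

Record sym_partial_action (pa : H -> B -> B) : Prop := {
  pa_bilinear : kbilinear pa;
  pa_one : forall a, pa 1 a = a;
  pa_mul : forall h a b, pa h (a * b) = sw cop h (fun x y => pa x a * pa y b);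
  pa_compl : forall h g a,
     pa h (pa g a) = sw cop h (fun x y => pa x 1 * pa (y * g) a);
  pa_compr : forall h g a,
     pa h (pa g a) = sw cop h (fun x y => pa (x * g) a * pa y 1)
}.

(* Tensor products  V (x) H.  For vector spaces over a field, the map  *)
(*   V (x) H -> Hom(H^*, V),   v (x) x |-> (l |-> l(x) v)              *)
(* is injective; we identify V (x) H with its image, i.e. with the      *)
(* span of the "pure tensors" below inside  {linear H -> k} -> V.      *)
Definition dualH := {linear H -> k^o}.

(* ambient type for B (x) H *)
Definition TBH := dualH -> B.
(* ambient type for Bbar (x) H, where Bbar is a subspace of Hom(H,B) *)
Definition TBbH := dualH -> H -> B.

Definition pureBH (b : B) (x : H) : TBH := fun l => l x *: b.
Definition pureBbH (f : H -> B) (x : H) : TBbH := fun l g => l x *: f g.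

Variable pa : H -> B -> B.

(* partial H-module structure on B (x) H: h.(b(x)x) = (h1.b) (x) h2 x *)
Definition pmodBH (h : H) (t : TBH) : TBH :=
  fun l => sw cop h (fun a c => pa a (t (lmf l c))).

(* b # h := b (h1 . 1) (x) h2 *)
Definition smash_elt (b : B) (h : H) : TBH :=
  fun l => sw cop h (fun a c => pureBH (b * pa a 1) c l).

Definition in_smash (t : TBH) : Prop :=
  exists s : seq (B * H), t = fun l => \sum_(p <- s) smash_elt p.1 p.2 l.

(* Standard dilation of the partial module B#H:                         *)
(*   phi(m)(g) = g . m,   (h |> F)(g) = F(g h),                          *)
(*   dilation = H |> phi(B#H) = span { h |> phi(m) : h in H, m in B#H }. *)
Definition phiBH (m : TBH) : H -> TBH := fun g => pmodBH g m.
Definition dil_act (h : H) (F : H -> TBH) : H -> TBH := fun g => F (g * h).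
Definition in_dil (F : H -> TBH) : Prop :=
  exists s : seq (H * TBH), allProp (fun p => in_smash p.2) s /\
    F = fun g l => \sum_(p <- s) dil_act p.1 (phiBH p.2) g l.

(* Globalization Bbar = H |> phi(B) inside Hom(H,B), phi(b)(g) = g . b  *)
Definition phiB (b : B) : H -> B := fun g => pa g b.
Definition glob_act (h : H) (f : H -> B) : H -> B := fun g => f (g * h).
Definition in_Bbar (f : H -> B) : Prop :=
  exists s : seq (H * B), f = fun g => \sum_(p <- s) glob_act p.1 (phiB p.2) g.

Definition in_BbarH (T : TBbH) : Prop :=
  exists s : seq ((H -> B) * H), allProp (fun p => in_Bbar p.1) s /\
    T = fun l g => \sum_(p <- s) pureBbH p.1 p.2 l g.

(* H-module structure on Bbar # H : h |> (f # x) = (h1 |> f) # h2 x *)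
Definition smash_act (h : H) (T : TBbH) : TBbH :=
  fun l g => sw cop h (fun a c => glob_act a (T (lmf l c)) g).

Definition dil_lin (a : k) (F1 F2 : H -> TBH) : H -> TBH :=
  fun g l => a *: F1 g l + F2 g l.
Definition BbH_lin (a : k) (T1 T2 : TBbH) : TBbH :=
  fun l g => a *: T1 l g + T2 l g.
Definition BbH_add (T1 T2 : TBbH) : TBbH := fun l g => T1 l g + T2 l g.
Definition BbH_zero : TBbH := fun l g => 0.

(* "the dilation of B#H is isomorphic, as a left H-module, to a direct
   summand of Bbar # H": an injective H-linear map Phi from the dilation
   into Bbar # H, and an H-submodule C of Bbar # H with
   Bbar # H = Phi(dilation) (+) C. *)
Definition iso_to_direct_summand (Phi : (H -> TBH) -> TBbH) (C : TBbH -> Prop)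
  : Prop :=
  (forall a F1 F2, in_dil F1 -> in_dil F2 ->
      Phi (dil_lin a F1 F2) = BbH_lin a (Phi F1) (Phi F2)) /\
  (forall h F, in_dil F -> Phi (dil_act h F) = smash_act h (Phi F)) /\
  (forall F1 F2, in_dil F1 -> in_dil F2 -> Phi F1 = Phi F2 -> F1 = F2) /\
  (forall F, in_dil F -> in_BbarH (Phi F)) /\
  (forall T, C T -> in_BbarH T) /\
  C BbH_zero /\
  (forall a T1 T2, C T1 -> C T2 -> C (BbH_lin a T1 T2)) /\
  (forall h T, C T -> C (smash_act h T)) /\
  (forall F, in_dil F -> C (Phi F) -> Phi F = BbH_zero) /\
  (forall T, in_BbarH T -> exists F c, in_dil F /\ C c /\ T = BbH_add (Phi F) c).

End PartialAction.

(* Main.v *)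
Require Import Defs.
From HB Require Import structures.
From mathcomp Require Import all_boot all_algebra.
From mathcomp Require classical_sets.
From Stdlib Require Import ProofIrrelevance FunctionalExtensionality PropExtensionality Classical IndefiniteDescription.
Set Implicit Arguments. Unset Strict Implicit. Unset Printing Implicit Defensive.
Import GRing.Theory.
Local Open Scope ring_scope.

Section Lin.
Variable k : fieldType.
Implicit Types U V W : lmodType k.

Lemma kl0 U V (f : U -> V) : klinear f -> f 0 = 0.
Proof. move=> hf; have e := hf 1 0 0; rewrite !scale1r addr0 in e.
by apply: (addrI (f 0)); rewrite addr0 -e. Qed.
Lemma klD U V (f : U -> V) : klinear f -> forall x y, f (x + y) = f x + f y.
Proof. by move=> hf x y; have := hf 1 x y; rewrite !scale1r. Qed.
Lemma klZ U V (f : U -> V) : klinear f -> forall a x, f (a *: x) = a *: f x.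
Proof. by move=> hf a x; have := hf a x 0; rewrite !addr0 (kl0 hf) addr0. Qed.
Lemma klN U V (f : U -> V) : klinear f -> forall x, f (- x) = - f x.
Proof. by move=> hf x; rewrite -scaleN1r klZ // scaleN1r. Qed.
Lemma klB U V (f : U -> V) : klinear f -> forall x y, f (x - y) = f x - f y.
Proof. by move=> hf x y; rewrite klD // klN. Qed.
Lemma kl_sum U V (f : U -> V) (I : Type) (r : seq I) (F : I -> U) :
  klinear f -> f (\sum_(i <- r) F i) = \sum_(i <- r) f (F i).
Proof.
move=> hf; elim: r => [|i r IH]; first by rewrite !big_nil kl0.
by rewrite !big_cons klD // IH.
Qed.

Lemma kl_id U : klinear (fun x : U => x). Proof. by []. Qed.
Lemma kl_comp U V W (g : V -> W) (f : U -> V) :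
  klinear g -> klinear f -> klinear (fun x => g (f x)).
Proof. by move=> hg hf a x y; rewrite hf hg. Qed.
Lemma kl_add U V (f g : U -> V) :
  klinear f -> klinear g -> klinear (fun x => f x + g x).
Proof.
move=> hf hg a x y; rewrite hf hg scalerDr.
by rewrite -!addrA; congr (_ + _); rewrite addrCA.
Qed.
Lemma kl_opp U V (f : U -> V) : klinear f -> klinear (fun x => - f x).
Proof. by move=> hf a x y; rewrite hf opprD scalerN. Qed.
Lemma kl_sub U V (f g : U -> V) :
  klinear f -> klinear g -> klinear (fun x => f x - g x).
Proof. by move=> hf hg; apply: kl_add => //; apply: kl_opp. Qed.
Lemma kl_zero U V : klinear (fun _ : U => (0 : V)).
Proof. by move=> a x y; rewrite scaler0 addr0. Qed.
Lemma kl_scr U V (f : U -> V) (c : k) : klinear f -> klinear (fun x => c *: f x).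
Proof. by move=> hf a x y; rewrite hf scalerDr !scalerA mulrC. Qed.
Lemma kl_scl U V (f : U -> k^o) (v : V) : klinear f -> klinear (fun x => f x *: v).
Proof. by move=> hf a x y; rewrite hf scalerDl scalerA. Qed.
Lemma kl_bsum U V (I : Type) (r : seq I) (F : I -> U -> V) :
  (forall i, klinear (F i)) -> klinear (fun x => \sum_(i <- r) F i x).
Proof.
move=> hF a x y; rewrite scaler_sumr -big_split /=.
by apply: eq_bigr => i _; rewrite hF.
Qed.
Lemma kl_lin U U' V (l : {linear U -> V}) (f : U' -> U) : klinear f -> klinear (fun x => l (f x)).
Proof. by move=> hf a x y; rewrite hf linearP. Qed.
Lemma kl_linf U V (l : {linear U -> V}) : klinear l.
Proof. by move=> a x y; rewrite linearP. Qed.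

Section Alg.
Variable A : algType k.
Lemma kl_mull U (f : U -> A) (c : A) : klinear f -> klinear (fun x => f x * c).
Proof. by move=> hf a x y; rewrite hf mulrDl scalerAl. Qed.
Lemma kl_mulr U (f : U -> A) (c : A) : klinear f -> klinear (fun x => c * f x).
Proof. by move=> hf a x y; rewrite hf mulrDr scalerAr. Qed.
End Alg.
End Lin.

Section SW.
Variables (k : fieldType) (H : algType k) (cop : H -> seq (H * H)).

Lemma sw_ext (V : zmodType) h (b1 b2 : H -> H -> V) :
  (forall a c, b1 a c = b2 a c) -> sw cop h b1 = sw cop h b2.
Proof. by move=> e; apply: eq_bigr => p _; rewrite e. Qed.
Lemma sw_sum (V : zmodType) h (I : Type) (r : seq I) (b : I -> H -> H -> V) :
  sw cop h (fun a c => \sum_(i <- r) b i a c) = \sum_(i <- r) sw cop h (b i).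
Proof. by rewrite /sw exchange_big. Qed.
Lemma sw_add (V : zmodType) h (b1 b2 : H -> H -> V) :
  sw cop h (fun a c => b1 a c + b2 a c) = sw cop h b1 + sw cop h b2.
Proof. by rewrite /sw big_split. Qed.
Lemma sw_opp (V : zmodType) h (b1 : H -> H -> V) :
  sw cop h (fun a c => - b1 a c) = - sw cop h b1.
Proof. by rewrite /sw sumrN. Qed.
Lemma sw_zero (V : zmodType) h : sw cop h (fun a c => (0 : V)) = 0.
Proof. by rewrite /sw big1. Qed.
Lemma sw_klin (U V : lmodType k) h (f : U -> V) (b : H -> H -> U) :
  klinear f -> sw cop h (fun a c => f (b a c)) = f (sw cop h b).
Proof. by move=> hf; rewrite /sw kl_sum. Qed.
Lemma sw_scale (V : lmodType k) h (c : k) (b : H -> H -> V) :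
  sw cop h (fun a c' => c *: b a c') = c *: sw cop h b.
Proof. by rewrite /sw scaler_sumr. Qed.
Lemma kl_sw_in (U V : lmodType k) h (b : U -> H -> H -> V) :
  (forall a c, klinear (fun x => b x a c)) -> klinear (fun x => sw cop h (b x)).
Proof. by move=> hb; rewrite /sw; apply: kl_bsum => p; apply: hb. Qed.
End SW.


Section App.
Variable k : fieldType.
Lemma kl_app1 (U X Y V : lmodType k) (p : X -> Y -> V) (f : U -> X) (y : Y) :
  (forall y, klinear (fun x => p x y)) -> klinear f -> klinear (fun z => p (f z) y).
Proof. by move=> hp hf; apply: (kl_comp (g := fun x => p x y)). Qed.
Lemma kl_app2 (U X Y V : lmodType k) (p : X -> Y -> V) (f : U -> Y) (x : X) :
  (forall x, klinear (p x)) -> klinear f -> klinear (fun z => p x (f z)).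
Proof. by move=> hp hf; apply: (kl_comp (g := p x)). Qed.
End App.


Section Hopf.
Variables (k : fieldType) (H : algType k) (cop : H -> seq (H * H)) (cou : H -> k) (S : H -> H).
Hypothesis hH : is_hopf cop cou S.

Lemma kl_S : klinear S. Proof. exact: antip_linear hH. Qed.
Lemma kl_Sc (U : lmodType k) (f : U -> H) : klinear f -> klinear (fun x => S (f x)).
Proof. by move=> hf; apply: kl_comp hf; exact: kl_S. Qed.
Lemma kl_cou (U : lmodType k) (f : U -> H) : klinear f -> klinear (fun x => (cou (f x) : k^o)).
Proof. by move=> hf; apply: kl_comp hf; exact: cou_linear hH. Qed.
Lemma kl_swarg (U V : lmodType k) (f : U -> H) (b : H -> H -> V) :
  kbilinear b -> klinear f -> klinear (fun x => sw cop (f x) b).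
Proof. by move=> hb hf; apply: (kl_comp (g := fun h => sw cop h b)) hf; exact: (cop_linear hH hb). Qed.

Ltac kl := first [ exact: kl_id | exact: kl_zero | solve [apply: kl_linf] | assumption
 | solve [apply: kl_sw_in => ? ?; kl]
 | solve [apply: kl_add; kl] | solve [apply: kl_sub; kl] | solve [apply: kl_opp; kl]
 | solve [apply: kl_scr; kl] | solve [apply: kl_scl; kl]
 | solve [apply: kl_mull; kl] | solve [apply: kl_mulr; kl]
 | solve [apply: kl_bsum => ?; kl]
 | solve [apply: kl_Sc; kl] | solve [apply: kl_cou; kl]
 | solve [apply: kl_lin; kl]
 | solve [apply: kl_swarg; [split => ? ; kl | kl]] ].

Lemma coassoc (U : lmodType k) (g : H -> H -> H -> U) h : ktrilinear g ->
  sw cop h (fun a b => sw cop a (fun c d => g c d b))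
  = sw cop h (fun a b => sw cop b (fun c d => g a c d)).
Proof. by move=> hg; exact: (cop_coassoc hH hg h). Qed.

Lemma sw_comm (V : zmodType) x y (g : H -> H -> H -> H -> V) :
  sw cop x (fun a b => sw cop y (fun c d => g a b c d))
  = sw cop y (fun c d => sw cop x (fun a b => g a b c d)).
Proof. by rewrite /sw exchange_big. Qed.

Lemma sw_S (h : H) b : S (sw cop h b) = sw cop h (fun a c => S (b a c)).
Proof. by rewrite (sw_klin _ _ _ kl_S). Qed.

Lemma S_mul x y : S (x * y) = S y * S x.
Proof.
have e1 : S y * S x = sw cop x (fun a b => sw cop y (fun c d =>
            S c * S a * sw cop b (fun e f => sw cop d (fun e' f' => e * e' * S (f * f'))))).
  transitivity (sw cop x (fun a b => sw cop y (fun c d => (cou (b * d)) *: (S c * S a)))).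
    rewrite -{1}(cou_right hH x) -{1}(cou_right hH y).
    rewrite !sw_S.
    rewrite -(sw_klin _ _ (f := fun z => _ * z)); last by kl.
    apply: sw_ext => a b; rewrite -(sw_klin _ _ (f := fun z => z * _)); last by kl.
    apply: sw_ext => c d; rewrite (cou_mul hH) (klZ kl_S) (klZ kl_S).
    by rewrite -scalerAl -scalerAr scalerA mulrC.
  apply: sw_ext => a b; apply: sw_ext => c d.
  have bl : kbilinear (fun u v : H => u * S v) by split => ?; kl.
  have := cop_mul hH bl b d => /= <-.
  by rewrite (antip_right hH) -scalerAr mulr1.
rewrite e1; symmetry.
pose G1 f := sw cop y (fun c d => sw cop d (fun e' f' => S c * e' * S (f * f'))).
have kG1 : klinear G1 by rewrite /G1; kl.
transitivity (G1 x); last first.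
  rewrite /G1 -coassoc; last by split; [|split] => *; kl.
  transitivity (sw cop y (fun c f' => cou c *: S (x * f'))).
    apply: sw_ext => a b; rewrite (sw_klin cop a (fun c d => S c * d) (f := fun z => z * S (x * b))); last by kl.
    by rewrite (antip_left hH) -scalerAl mul1r.
  rewrite -[in RHS](cou_left hH y) -(sw_klin cop y (fun a b => cou a *: b) (f := fun z => S (x * z))); last by kl.
  by apply: sw_ext => a b /=; rewrite -(klZ kl_S) -scalerAr.
rewrite -[in RHS](cou_left hH x) -(sw_klin cop x (fun a b => cou a *: b) kG1).
pose G a e f := sw cop y (fun c d => sw cop d (fun e' f' => S c * (S a * e) * e' * S (f * f'))).
transitivity (sw cop x (fun a b => sw cop b (fun e f => G a e f))).
  apply: sw_ext => a b; rewrite /G sw_comm; apply: sw_ext => c d.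
  rewrite -(sw_klin _ _ (f := fun z => S c * S a * z)); last by kl.
  apply: sw_ext => e f; rewrite -(sw_klin _ _ (f := fun z => S c * S a * z)); last by kl.
  by apply: sw_ext => e' f'; rewrite !mulrA.
rewrite -coassoc; last by rewrite /G; split; [|split] => *; kl.
apply: sw_ext => a' f; rewrite /G.
rewrite (sw_klin cop a' (fun a e => S a * e) (f := fun z => sw cop y (fun c d => sw cop d (fun e' f' => S c * z * e' * S (f * f'))))); last by kl.
rewrite (antip_left hH) /G1; apply: sw_ext => c d; apply: sw_ext => e' f'.
by rewrite -scalerAl (klZ kl_S) -!scalerAr mulr1 -!scalerAl.
Qed.

Lemma S1 : S 1 = 1.
Proof.
have := antip_left hH 1; rewrite (cou_one hH) scale1r.
have bl : kbilinear (fun a b : H => S a * b) by split => ?; kl.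
by rewrite (cop_one hH bl) mulr1.
Qed.

Variable Si : H -> H.
Hypotheses (hSi1 : cancel S Si) (hSi2 : cancel Si S).

Lemma kl_Si : klinear Si.
Proof.
move=> a x y; apply: (can_inj hSi1).
by rewrite kl_S !hSi2.
Qed.

Lemma Si1 b : sw cop b (fun c d => d * Si c) = cou b *: 1.
Proof.
apply: (can_inj hSi1); rewrite sw_S (klZ kl_S) S1.
rewrite -(antip_right hH); apply: sw_ext => c d.
by rewrite S_mul hSi2.
Qed.

Lemma Si2 b : sw cop b (fun c d => Si d * c) = cou b *: 1.
Proof.
apply: (can_inj hSi1); rewrite sw_S (klZ kl_S) S1.
rewrite -(antip_left hH); apply: sw_ext => c d.
by rewrite S_mul hSi2.
Qed.
End Hopf.


Section MkLin.
Variables (k : fieldType) (H : algType k) (f : H -> k^o).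
Hypothesis hf : klinear f.
Definition wf := f.
Lemma wf_lin : linear wf.
Proof. by move=> a x y; rewrite /wf hf. Qed.
HB.instance Definition _ := GRing.isLinear.Build k H k^o *:%R wf wf_lin.
Lemma lin_exists : exists l : dualH H, forall x, l x = f x.
Proof. by exists wf. Qed.
End MkLin.

Section Sep.
Variables (k : fieldType) (H : algType k).

Fixpoint inspan (xs : seq H) (y : H) : Prop :=
  if xs is x :: xs' then exists a, inspan xs' (y - a *: x) else y = 0.

Lemma inspan0 xs : inspan xs 0.
Proof. by elim: xs => //= x xs IH; exists 0; rewrite scale0r subr0. Qed.

Lemma inspan_lin xs a y z : inspan xs y -> inspan xs z -> inspan xs (a *: y + z).
Proof.
elim: xs y z => [|x xs IH] y z /=; first by move=> -> ->; rewrite scaler0 addr0.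
case=> c hc [d hd]; exists (a * c + d).
have -> : a *: y + z - (a * c + d) *: x = a *: (y - c *: x) + (z - d *: x).
  by rewrite scalerDr scalerN scalerDl scalerA opprD addrACA.
exact: IH.
Qed.


Lemma inspan_cons xs x y : inspan xs y -> inspan (x :: xs) y.
Proof. by move=> h; exists 0; rewrite scale0r subr0. Qed.



Lemma allProp_impl (T : Type) (P Q : T -> Prop) s : (forall x, P x -> Q x) -> allProp P s -> allProp Q s.
Proof. by move=> h; elim: s => //= x s IH [h1 h2]; split; [exact: h | exact: IH]. Qed.

Lemma inspan_self xs : allProp (inspan xs) xs.
Proof.
elim: xs => //= x xs IH; split.
  by exists 1; rewrite scale1r subrr; exact: inspan0.
by apply: allProp_impl IH => y; exact: inspan_cons.
Qed.

Definition subsp (A : H -> Prop) := A 0 /\ forall a y z, A y -> A z -> A (a *: y + z).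

Lemma sep xs x : ~ inspan xs x ->
  exists l : dualH H, l x = 1 /\ allProp (fun y => l y = 0) xs.
Proof.
move=> nx.
pose P (A : classical_sets.set H) := A = (fun _ => False) \/
   (subsp A /\ (forall y, inspan xs y -> A y) /\ ~ A x).
have [A [PA Amax]] : exists A, P A /\ forall B, classical_sets.proper A B -> ~ P B.
  apply: classical_sets.Zorn_bigcup => F FP Ftot.
  case: (classic (exists X, F X /\ exists y, X y)) => [[X0 [FX0 [y0 X0y0]]]|nF]; last first.
    left; apply: functional_extensionality => y; apply: propositional_extensionality; split => //.
    case=> X FX Xy; apply: nF; by exists X; split => //; exists y.
  have sub_of : forall X, F X -> forall y, X y -> subsp X /\ (forall y, inspan xs y -> X y) /\ ~ X x.
    move=> X FX y Xy; case: (FP X FX) => // eX; by rewrite eX in Xy.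
  have [sX0 [iX0 nX0]] := sub_of X0 FX0 y0 X0y0.
  right; split; [split|split].
  - by exists X0 => //; exact: sX0.1.
  - move=> a y z [X1 FX1 X1y] [X2 FX2 X2z].
    case: (Ftot X1 X2 FX1 FX2) => h.
      have [[_ c] _] := sub_of X2 FX2 z X2z.
      by exists X2 => //; apply: c => //; exact: h.
    have [[_ c] _] := sub_of X1 FX1 y X1y.
    by exists X1 => //; apply: c => //; exact: h.
  - by move=> y hy; exists X0 => //; exact: iX0.
  - case=> X FX Xx; have [_ [_ nXx]] := sub_of X FX x Xx; exact: nXx.
have [sA [iA nA]] : subsp A /\ (forall y, inspan xs y -> A y) /\ ~ A x.
  case: PA => // eA; exfalso; apply: (Amax (inspan xs)); last first.
    by right; split; [split; [exact: inspan0 | move=> *; exact: inspan_lin] | split].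
  rewrite eA; split => // h; exact: (h 0 (inspan0 xs)).
have ex : forall z, exists a, A (z - a *: x).
  move=> z; apply: NNPP => nz.
  pose Bs (w : H) := exists c, A (w - c *: z).
  have nzA : ~ A z by move=> Az; apply: nz; exists 0; rewrite scale0r subr0.
  apply: (Amax Bs).
    split; first by move=> w Aw; exists 0; rewrite scale0r subr0.
    move=> h; apply: nzA; apply: h; exists 1; rewrite scale1r subrr; exact: sA.1.
  right; split; [split|split].
  - by exists 0; rewrite scale0r subr0; exact: sA.1.
  - move=> a y w [c1 h1] [c2 h2]; exists (a * c1 + c2).
    have -> : a *: y + w - (a * c1 + c2) *: z = a *: (y - c1 *: z) + (w - c2 *: z).
      by rewrite scalerDr scalerN scalerDl scalerA opprD addrACA.
    exact: sA.2.
  - by move=> y hy; exists 0; rewrite scale0r subr0; exact: iA.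
  - case=> c hc.
    have [c0|cn0] := eqVneq c 0.
      by apply: nA; move: hc; rewrite c0 scale0r subr0.
    apply: nz; exists c^-1.
    have -> : z - c^-1 *: x = (- c^-1) *: (x - c *: z) + 0.
      by rewrite addr0 scalerBr scalerA mulNr mulVf // scaleN1r opprK scaleNr addrC.
    by apply: sA.2 => //; exact: sA.1.
have uniq : forall z a a', A (z - a *: x) -> A (z - a' *: x) -> a = a'.
  move=> z a a' h1 h2; apply: NNPP => ne; apply: nA.
  have d : A ((a' - a) *: x).
    have -> : (a' - a) *: x = 1 *: (z - a *: x) + (- (z - a' *: x)).
      by rewrite scale1r scalerBl opprB addrCA addrAC subrr add0r.
    apply: sA.2 => //.
    have -> : - (z - a' *: x) = (-1) *: (z - a' *: x) + 0 by rewrite addr0 scaleN1r.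
    by apply: sA.2 => //; exact: sA.1.
  have -> : x = (a' - a)^-1 *: ((a' - a) *: x) + 0.
    by rewrite addr0 scalerA mulVf ?scale1r // subr_eq0 eq_sym; apply/eqP => e; apply: ne.
  by apply: sA.2 => //; exact: sA.1.
pose f (z : H) : k^o := proj1_sig (constructive_indefinite_description _ (ex z)).
have fP : forall z, A (z - f z *: x).
  by move=> z; rewrite /f; case: constructive_indefinite_description.
have hf : klinear f.
  move=> a y z; apply: (uniq (a *: y + z)); first exact: fP.
  have -> : a *: y + z - (a *: f y + f z) *: x = a *: (y - f y *: x) + (z - f z *: x).
    by rewrite (_ : (a *: f y : k^o) = a * f y) // scalerDl -scalerA opprD addrACA scalerDr scalerN.
  by apply: sA.2; exact: fP.
have [l hl] := lin_exists hf.
exists l; split.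
  rewrite hl; symmetry; apply: (uniq x); last exact: fP.
  by rewrite scale1r subrr; exact: sA.1.
apply: allProp_impl (inspan_self xs) => y hy.
rewrite hl; symmetry; apply: (uniq y); last exact: fP.
by rewrite scale0r subr0; exact: iA.
Qed.
End Sep.

Section WW.
Variables (k : fieldType) (H : algType k) (B : lmodType k).

Lemma absorb (s' : seq (B * H)) x b : inspan (map snd s') x ->
  exists s'' : seq (B * H), size s'' = size s' /\
   forall (V : lmodType k) (Psi : H -> B -> V), kbilinear Psi ->
     Psi x b + \sum_(p <- s') Psi p.2 p.1 = \sum_(p <- s'') Psi p.2 p.1.
Proof.
elim: s' x b => [|[b1 x1] s1 IH] x b /=.
  move=> ->; exists [::]; split => // V Psi [h1 h2].
  by rewrite !big_nil (kl0 (h1 b)) addr0.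
case=> a ha; have [s1'' [hs hP]] := IH _ b ha.
exists ((b1 + a *: b, x1) :: s1''); split; first by rewrite /= hs.
move=> V Psi hPsi; rewrite !big_cons /= -(hP V Psi hPsi).
have [h1 h2] := hPsi.
have -> : Psi x b = Psi (x - a *: x1) b + a *: Psi x1 b.
  by rewrite -(klZ (h1 b)) -(klD (h1 b)) subrK.
rewrite (klD (h2 x1)) (klZ (h2 x1)).
by rewrite addrACA [in RHS]addrACA (addrC (Psi x1 b1)).
Qed.

Lemma Wlem (s : seq (B * H)) : (forall l : dualH H, \sum_(p <- s) l p.2 *: p.1 = 0) ->
  forall (V : lmodType k) (Psi : H -> B -> V), kbilinear Psi -> \sum_(p <- s) Psi p.2 p.1 = 0.
Proof.
move: {2}(size s) (leqnn (size s)) => n; elim: n s => [|n IH] [|[b x] s'] //=; try by move=> *; rewrite big_nil.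
move=> hn hs V Psi hPsi.
case: (classic (inspan (map snd s') x)) => hx.
  have [s'' [hsz hP]] := absorb b hx.
  have hl : forall l : dualH H, \sum_(p <- s'') l p.2 *: p.1 = 0.
    move=> l; rewrite -(hP _ (fun x b => (l x : k) *: b)); first by have := hs l; rewrite big_cons.
    by split => ?; [apply: kl_scl; exact: kl_linf | exact: kl_scr].
  rewrite big_cons hP //; apply: IH => //; by rewrite hsz.
have [l [lx l0]] := sep hx.
have hb : b = 0.
  have := hs l; rewrite big_cons /= lx scale1r big_seq_cond big1 ?addr0 //.
  move=> [b' x'] /andP [hin _] /=.
  suff -> : l x' = 0 by rewrite scale0r.
  elim: s' hin l0 {hs hn hx IH} => //= [[b2 x2] s2] IH2; rewrite inE => /orP [/eqP [_ ->] [] //|hin [_ h]].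
  exact: IH2.
rewrite big_cons /= hb (kl0 (hPsi.2 x)) add0r; apply: IH => // l'.
by have := hs l'; rewrite big_cons /= hb scaler0 add0r.
Qed.
End WW.


Section Main.
Variables (k : fieldType) (H B : algType k) (cop : H -> seq (H * H)) (cou : H -> k)
  (S : H -> H) (pa : H -> B -> B).
Hypothesis hH : is_hopf cop cou S.
Hypothesis hpa : sym_partial_action cop pa.
Variable Si : H -> H.
Hypotheses (hSi1 : cancel S Si) (hSi2 : cancel Si S).

Lemma dual_ext (l1 l2 : dualH H) : (forall x, l1 x = l2 x) -> l1 = l2.
Proof.
move=> e.
case: l1 e => f1 c1; case: l2 => f2 c2 /= e.
have ef : f1 = f2 by apply: functional_extensionality.
subst f2.
case: c1 => [[[a1 a1']] [b1]]; case: c2 => [[[a2 a2']] [b2]].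
by rewrite (proof_irrelevance _ a1 a2) (proof_irrelevance _ a1' a2') (proof_irrelevance _ b1 b2).
Qed.

Lemma lmfA (l : dualH H) c c' : @eq (dualH H) (lmf (lmf l c) c') (lmf l (c * c')).
Proof. by apply: dual_ext => x; rewrite /= /lmf /= mulrA. Qed.
Lemma lmf1 (l : dualH H) : @eq (dualH H) (lmf l 1) l.
Proof. by apply: dual_ext => x; rewrite /= /lmf /= mul1r. Qed.

Lemma kS : klinear S. Proof. exact: antip_linear hH. Qed.
Lemma kSi : klinear Si. Proof. have := @kl_Si _ _ _ _ _ hH _ hSi1 hSi2. exact. Qed.
Lemma hpl : forall y, klinear (fun x => pa x y). Proof. exact: (pa_bilinear hpa).1. Qed.
Lemma hpr : forall x, klinear (pa x). Proof. exact: (pa_bilinear hpa).2. Qed.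
Lemma kcou : klinear (cou : H -> k^o). Proof. exact: cou_linear hH. Qed.
Lemma kl_swargC (U V : lmodType k) (f : U -> H) (b : H -> H -> V) :
  kbilinear b -> klinear f -> klinear (fun x => sw cop (f x) b).
Proof. by move=> hb hf; apply: (kl_comp (g := fun h => sw cop h b)) hf; exact: (cop_linear hH hb). Qed.

Definition goodm (t : TBH H B) := forall l, klinear (fun c => t (lmf l c)).
Definition goodF (F : H -> TBH H B) := forall l, kbilinear (fun a c => F a (lmf l c)).
Definition goodT (T : TBbH H B) := forall l, kbilinear (fun a c => T (lmf l c) a).

Lemma kl_gm t l (U : lmodType k) (f : U -> H) : goodm t -> klinear f -> klinear (fun x => t (lmf l (f x))).
Proof. by move=> ht hf; apply: (kl_comp (g := fun c => t (lmf l c))). Qed.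
Lemma kl_gF1 F l c (U : lmodType k) (f : U -> H) : goodF F -> klinear f -> klinear (fun x => F (f x) (lmf l c)).
Proof. by move=> ht hf; apply: (kl_comp (g := fun a => F a (lmf l c))) => //; exact: (ht l).1. Qed.
Lemma kl_gF2 F l a (U : lmodType k) (f : U -> H) : goodF F -> klinear f -> klinear (fun x => F a (lmf l (f x))).
Proof. by move=> ht hf; apply: (kl_comp (g := fun c => F a (lmf l c))) => //; exact: (ht l).2. Qed.
Lemma kl_gF0 F l (U : lmodType k) (f : U -> H) : goodF F -> klinear f -> klinear (fun x => F (f x) l).
Proof. by move=> ht hf; have := kl_gF1 l 1 ht hf; rewrite lmf1. Qed.
Lemma kl_gT1 T l c (U : lmodType k) (f : U -> H) : goodT T -> klinear f -> klinear (fun x => T (lmf l c) (f x)).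
Proof. by move=> ht hf; apply: (kl_comp (g := fun a => T (lmf l c) a)) => //; exact: (ht l).1. Qed.
Lemma kl_gT2 T l a (U : lmodType k) (f : U -> H) : goodT T -> klinear f -> klinear (fun x => T (lmf l (f x)) a).
Proof. by move=> ht hf; apply: (kl_comp (g := fun c => T (lmf l c) a)) => //; exact: (ht l).2. Qed.
Lemma kl_gT0 T l (U : lmodType k) (f : U -> H) : goodT T -> klinear f -> klinear (fun x => T l (f x)).
Proof. by move=> ht hf; have := kl_gT1 l 1 ht hf; rewrite lmf1. Qed.

Lemma kl_gmb t l c (U : lmodType k) (f : U -> H) : goodm t -> klinear f -> klinear (fun x => t (lmf (lmf l (f x)) c)).
Proof.
move=> ht hf.
have -> : (fun x => t (lmf (lmf l (f x)) c)) = (fun x => t (lmf l (f x * c))).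
  by apply: functional_extensionality => x; rewrite lmfA.
by apply: kl_gm => //; exact: kl_mull.
Qed.
Lemma kl_gF2b F l a c (U : lmodType k) (f : U -> H) : goodF F -> klinear f -> klinear (fun x => F a (lmf (lmf l (f x)) c)).
Proof.
move=> ht hf.
have -> : (fun x => F a (lmf (lmf l (f x)) c)) = (fun x => F a (lmf l (f x * c))).
  by apply: functional_extensionality => x; rewrite lmfA.
by apply: kl_gF2 => //; exact: kl_mull.
Qed.
Lemma kl_gT2b T l a c (U : lmodType k) (f : U -> H) : goodT T -> klinear f -> klinear (fun x => T (lmf (lmf l (f x)) c) a).
Proof.
move=> ht hf.
have -> : (fun x => T (lmf (lmf l (f x)) c) a) = (fun x => T (lmf l (f x * c)) a).
  by apply: functional_extensionality => x; rewrite lmfA.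
by apply: kl_gT2 => //; exact: kl_mull.
Qed.
Lemma kl_bsumP (U V : lmodType k) (I : Type) (P : I -> Prop) (r : seq I) (F : I -> U -> V) :
  allProp P r -> (forall i, P i -> klinear (F i)) -> klinear (fun x => \sum_(i <- r) F i x).
Proof.
move=> hr hF; elim: r hr => [|i r IH] /= hr.
  by move=> a x y; rewrite !big_nil scaler0 addr0.
case: hr => hi hr.
have -> : (fun x => \sum_(j <- i :: r) F j x) = (fun x => F i x + \sum_(j <- r) F j x).
  by apply: functional_extensionality => x; rewrite big_cons.
by apply: kl_add; [exact: hF | exact: IH].
Qed.

Ltac kl_hook := fail.
Ltac kl := first [ exact: kl_id | exact: kl_zero | solve [apply: kl_linf] | assumption
 | kl_hook
 | solve [apply: kl_sw_in => ? ?; kl]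
 | solve [apply: kl_add; kl] | solve [apply: kl_sub; kl] | solve [apply: kl_opp; kl]
 | solve [apply: kl_scr; kl] | solve [apply: kl_scl; kl]
 | solve [apply: kl_mull; kl] | solve [apply: kl_mulr; kl]
 | solve [apply: kl_bsum => ?; kl]
 | solve [apply: kl_lin; kl]
 | solve [apply: kl_swargC; [split => ?; kl | kl]]
 | solve [apply: kl_app1; [exact: hpl | kl]] | solve [apply: kl_app2; [exact: hpr | kl]]
 | solve [apply: kl_comp; [exact: kS | kl]] | solve [apply: kl_comp; [exact: kSi | kl]]
 | solve [apply: kl_comp; [exact: kcou | kl]]
 | solve [apply: kl_gm; [eassumption | kl]]
 | solve [apply: kl_gF1; [eassumption | kl]] | solve [apply: kl_gF2; [eassumption | kl]]
 | solve [apply: kl_gF0; [eassumption | kl]]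
 | solve [apply: kl_gT1; [eassumption | kl]] | solve [apply: kl_gT2; [eassumption | kl]]
 | solve [apply: kl_gT0; [eassumption | kl]]
 | solve [apply: kl_comp; [eassumption | kl]] ].
Ltac kl_hook ::= first [ solve [apply: kl_gmb; [eassumption | kl]]
 | solve [apply: kl_gF2b; [eassumption | kl]] | solve [apply: kl_gT2b; [eassumption | kl]] ].
Ltac kl2 := split => *; kl.
Ltac kl3 := split; [|split] => *; kl.

Lemma coassocC (U : lmodType k) (g : H -> H -> H -> U) h : ktrilinear g ->
  sw cop h (fun a b => sw cop a (fun c d => g c d b))
  = sw cop h (fun a b => sw cop b (fun c d => g a c d)).
Proof. by move=> hg; exact: (cop_coassoc hH hg h). Qed.

Definition psi (T : TBbH H B) : H -> TBH H B := fun g l => sw cop g (fun a c => T (lmf l c) a).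
Definition Phi (F : H -> TBH H B) : TBbH H B := fun l g => sw cop g (fun a c => F a (lmf l (Si c))).

Lemma psiPhi F : goodF F -> psi (Phi F) = F.
Proof.
move=> hF; apply: functional_extensionality => g; apply: functional_extensionality => l.
rewrite /psi /Phi.
transitivity (sw cop g (fun a c => sw cop a (fun a' c' => F a' (lmf l (c * Si c'))))).
  by apply: sw_ext => a c; apply: sw_ext => a' c'; rewrite lmfA.
rewrite coassocC; last by kl3.
transitivity (sw cop g (fun a c => cou c *: F a l)).
  apply: sw_ext => a c.
  rewrite (sw_klin cop c (fun a'' c'' => c'' * Si a'') (f := fun z => F a (lmf l z))); last by kl.
  by rewrite (Si1 hH hSi1 hSi2) (klZ ((hF l).2 a)) lmf1.
have hl : klinear (fun x => F x l) by kl.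
rewrite -[in RHS](cou_right hH g) -(sw_klin cop g (fun a c => cou c *: a) hl).
by apply: sw_ext => a c; rewrite (klZ hl).
Qed.

Lemma Phipsi T : goodT T -> Phi (psi T) = T.
Proof.
move=> hT; apply: functional_extensionality => l; apply: functional_extensionality => g.
rewrite /psi /Phi.
transitivity (sw cop g (fun a c => sw cop a (fun a' c' => T (lmf l (Si c * c')) a'))).
  by apply: sw_ext => a c; apply: sw_ext => a' c'; rewrite lmfA.
rewrite coassocC; last by kl3.
transitivity (sw cop g (fun a c => cou c *: T l a)).
  apply: sw_ext => a c.
  rewrite (sw_klin cop c (fun a'' c'' => Si c'' * a'') (f := fun z => T (lmf l z) a)); last by kl.
  by rewrite (Si2 hH hSi1 hSi2) (klZ ((hT l).2 a)) lmf1.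
have hl : klinear (fun x => T l x) by kl.
rewrite -[in RHS](cou_right hH g) -(sw_klin cop g (fun a c => cou c *: a) hl).
by apply: sw_ext => a c; rewrite (klZ hl).
Qed.

Lemma good_smash t : in_smash cop pa t -> goodm t.
Proof. by case=> s -> l /=; rewrite /smash_elt /pureBH /lmf /=; kl. Qed.

Lemma good_phiBH m : goodm m -> goodF (phiBH cop pa m).
Proof. by move=> hm l; split => [c|a]; rewrite /phiBH /pmodBH; kl. Qed.

Lemma good_dact h F : goodF F -> goodF (dil_act h F).
Proof. by move=> hF l; split => [c|a]; rewrite /dil_act; kl. Qed.

Lemma good_Phi F : goodF F -> goodT (Phi F).
Proof. by move=> hF l; split => [c|a]; rewrite /Phi; kl. Qed.

Lemma good_sact h T : goodT T -> goodT (smash_act cop h T).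
Proof. by move=> hT l; split => [c|a]; rewrite /smash_act /glob_act; kl. Qed.

Lemma good_dil F : in_dil cop pa F -> goodF F.
Proof.
case=> s [hs ->] l; split => [c|a] /=.
  apply: (kl_bsumP hs) => p hp.
  exact: ((good_dact p.1 (good_phiBH (good_smash hp))) l).1.
apply: (kl_bsumP hs) => p hp.
exact: ((good_dact p.1 (good_phiBH (good_smash hp))) l).2.
Qed.

Lemma lin_Bbar f : in_Bbar pa f -> klinear f.
Proof. by case=> s ->; rewrite /glob_act /phiB; kl. Qed.

Lemma good_BbarH T : in_BbarH pa T -> goodT T.
Proof.
case=> s [hs ->] l; split => [c|a] /=; rewrite /pureBbH.
  apply: (kl_bsumP hs) => p hp; apply: kl_scr; exact: lin_Bbar.
by rewrite /lmf; kl.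
Qed.

Lemma psi_act h T : goodT T -> psi (smash_act cop h T) = dil_act h (psi T).
Proof.
move=> hT; apply: functional_extensionality => g; apply: functional_extensionality => l.
rewrite /psi /dil_act /smash_act /glob_act.
have bl : kbilinear (fun a c => T (lmf l c) a) by kl2.
rewrite (cop_mul hH bl g h); apply: sw_ext => a b; apply: sw_ext => c d.
by rewrite lmfA.
Qed.

Lemma Phi_act h F : goodF F -> Phi (dil_act h F) = smash_act cop h (Phi F).
Proof.
move=> hF.
rewrite -[LHS](Phipsi (good_Phi (good_dact h hF))) psiPhi; last exact: good_dact.
rewrite -[RHS](Phipsi (good_sact h (good_Phi hF))) psi_act; last exact: good_Phi.
by rewrite psiPhi.
Qed.

Lemma allProp_cat (T : Type) (P : T -> Prop) s1 s2 : allProp P s1 -> allProp P s2 -> allProp P (s1 ++ s2).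
Proof. by elim: s1 => //= x s1 IH [h1 h2] h; split => //; exact: IH. Qed.
Lemma allProp_map (T1 T2 : Type) (P : T2 -> Prop) (Q : T1 -> Prop) (f : T1 -> T2) s :
  (forall x, Q x -> P (f x)) -> allProp Q s -> allProp P (map f s).
Proof. by move=> hf; elim: s => //= x s IH [h1 h2]; split; [exact: hf | exact: IH]. Qed.
Lemma allProp_all (T : Type) (P : T -> Prop) s : (forall x, P x) -> allProp P s.
Proof. by move=> h; elim: s => //= x s ->. Qed.

Definition subspB (P : TBbH H B -> Prop) :=
  P (@BbH_zero _ H B) /\ forall a T1 T2, P T1 -> P T2 -> P (BbH_lin a T1 T2).

Lemma subspB_sum P (I : Type) (Q : I -> Prop) (r : seq I) (G : I -> TBbH H B) :
  subspB P -> allProp Q r -> (forall i, Q i -> P (G i)) ->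
  P (fun l g => \sum_(i <- r) G i l g).
Proof.
move=> [h0 hl] hr hG; elim: r hr => [|i r IH] /= hr.
  suff -> : (fun l g => \sum_(i <- [::]) G i l g) = @BbH_zero _ H B by [].
  by apply: functional_extensionality => l; apply: functional_extensionality => g; rewrite big_nil.
case: hr => hi hr.
suff -> : (fun l g => \sum_(j <- i :: r) G j l g) = BbH_lin 1 (G i) (fun l g => \sum_(j <- r) G j l g).
  by apply: hl; [exact: hG | exact: IH].
by apply: functional_extensionality => l; apply: functional_extensionality => g; rewrite big_cons /BbH_lin scale1r.
Qed.

Lemma subspB_sub P T1 T2 : subspB P -> P T1 -> P T2 -> P (fun l g => T1 l g - T2 l g).
Proof.
move=> [h0 hl] h1 h2.
suff -> : (fun l g => T1 l g - T2 l g) = BbH_lin (-1) T2 T1 by apply: hl.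
by apply: functional_extensionality => l; apply: functional_extensionality => g; rewrite /BbH_lin scaleN1r addrC.
Qed.

Lemma subspB_add P T1 T2 : subspB P -> P T1 -> P T2 -> P (BbH_add T1 T2).
Proof.
move=> [h0 hl] h1 h2.
suff -> : BbH_add T1 T2 = BbH_lin 1 T1 T2 by apply: hl.
by apply: functional_extensionality => l; apply: functional_extensionality => g; rewrite /BbH_lin scale1r.
Qed.

Lemma sw_big (V : zmodType) h (b : H -> H -> V) : sw cop h b = \sum_(q <- cop h) b q.1 q.2.
Proof. by []. Qed.

Lemma Bbar_phiB b : in_Bbar pa (phiB pa b).
Proof.
exists [:: (1, b)]; apply: functional_extensionality => g.
by rewrite big_seq1 /glob_act /phiB /= mulr1.
Qed.
Lemma Bbar_glob h f : in_Bbar pa f -> in_Bbar pa (glob_act h f).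
Proof.
case=> s ->; exists (map (fun p => (h * p.1, p.2)) s); apply: functional_extensionality => g.
by rewrite /glob_act big_map; apply: eq_bigr => p _ /=; rewrite mulrA.
Qed.
Lemma Bbar_scale a f : in_Bbar pa f -> in_Bbar pa (fun g => a *: f g).
Proof.
case=> s ->; exists (map (fun p => (p.1, a *: p.2)) s); apply: functional_extensionality => g.
rewrite big_map scaler_sumr; apply: eq_bigr => p _ /=.
by rewrite /glob_act /phiB (klZ (hpr _)).
Qed.

Lemma subspB_BbarH : subspB (in_BbarH pa).
Proof.
split.
  exists [::]; split => //; apply: functional_extensionality => l; apply: functional_extensionality => g.
  by rewrite big_nil.
move=> a T1 T2 [s1 [h1 ->]] [s2 [h2 ->]].
exists (map (fun p => (fun g => a *: p.1 g, p.2)) s1 ++ s2); split.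
  by apply: allProp_cat => //; apply: allProp_map h1 => p; exact: Bbar_scale.
apply: functional_extensionality => l; apply: functional_extensionality => g.
rewrite /BbH_lin big_cat big_map scaler_sumr; congr (_ + _); apply: eq_bigr => p _.
by rewrite /pureBbH /= !scalerA mulrC.
Qed.

Lemma BbarH_pure f x : in_Bbar pa f -> in_BbarH pa (pureBbH f x).
Proof.
move=> hf; exists [:: (f, x)]; split => //=.
by apply: functional_extensionality => l; apply: functional_extensionality => g; rewrite big_seq1.
Qed.

Lemma BbarH_sact h T : in_BbarH pa T -> in_BbarH pa (smash_act cop h T).
Proof.
case=> s [hs ->].
have -> : smash_act cop h (fun l g => \sum_(p <- s) pureBbH p.1 p.2 l g) =
  (fun l g => \sum_(p <- s) (fun l g => \sum_(q <- cop h) pureBbH (glob_act q.1 p.1) (q.2 * p.2) l g) l g).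
  apply: functional_extensionality => l; apply: functional_extensionality => g.
  rewrite /smash_act /glob_act /pureBbH /= sw_sum /sw; apply: eq_bigr => p _.
  by apply: eq_bigr => q _; rewrite /lmf /=.
apply: (subspB_sum subspB_BbarH hs) => p hp.
apply: (subspB_sum (Q := fun _ => True) subspB_BbarH); first exact: allProp_all.
by move=> q _; apply: BbarH_pure; exact: Bbar_glob.
Qed.

Definition Xsm b x : TBbH H B := fun l g => sw cop x (fun a c => pureBbH (phiB pa (b * pa a 1)) c l g).
Definition Gen b x : TBbH H B := fun l g => pureBbH (phiB pa b) x l g - Xsm b x l g.

Lemma BbarH_Xsm b x : in_BbarH pa (Xsm b x).
Proof.
rewrite /Xsm; apply: (subspB_sum (Q := fun _ => True) subspB_BbarH); first exact: allProp_all.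
by move=> q _; apply: BbarH_pure; exact: Bbar_phiB.
Qed.

Lemma psi_Xsm b x : psi (Xsm b x) = phiBH cop pa (smash_elt cop pa b x).
Proof.
apply: functional_extensionality => g; apply: functional_extensionality => l.
rewrite /psi /Xsm /phiBH /pmodBH /smash_elt /pureBbH /pureBH /phiB.
apply: sw_ext => a c; rewrite -(sw_klin _ _ _ (hpr a)); apply: sw_ext => a' c'.
by rewrite (klZ (hpr a)).
Qed.

Lemma Phi_gen b x : Phi (phiBH cop pa (smash_elt cop pa b x)) = Xsm b x.
Proof. by rewrite -psi_Xsm Phipsi //; apply: good_BbarH; exact: BbarH_Xsm. Qed.


Definition dzero : H -> TBH H B := fun _ _ => 0.
Definition subspD (P : (H -> TBH H B) -> Prop) :=
  P dzero /\ forall a F1 F2, P F1 -> P F2 -> P (dil_lin a F1 F2).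

Lemma smash_scale a t : in_smash cop pa t -> in_smash cop pa (fun l => a *: t l).
Proof.
case=> s ->; exists (map (fun q => (a *: q.1, q.2)) s); apply: functional_extensionality => l.
rewrite big_map scaler_sumr; apply: eq_bigr => q _ /=.
rewrite /smash_elt /pureBH -sw_scale; apply: sw_ext => x y.
by rewrite -scalerAl !scalerA mulrC.
Qed.

Lemma pmod_scale h a t : pmodBH cop pa h (fun l => a *: t l) = fun l => a *: pmodBH cop pa h t l.
Proof.
apply: functional_extensionality => l; rewrite /pmodBH -sw_scale.
by apply: sw_ext => x y; rewrite (klZ (hpr _)).
Qed.

Lemma subspD_dil : subspD (in_dil cop pa).
Proof.
split.
  exists [::]; split => //; apply: functional_extensionality => g; apply: functional_extensionality => l.
  by rewrite big_nil.
move=> a F1 F2 [s1 [h1 ->]] [s2 [h2 ->]].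
exists (map (fun p => (p.1, fun l => a *: p.2 l)) s1 ++ s2); split.
  by apply: allProp_cat => //; apply: allProp_map h1 => p /=; exact: smash_scale.
apply: functional_extensionality => g; apply: functional_extensionality => l.
rewrite /dil_lin big_cat big_map scaler_sumr; congr (_ + _); apply: eq_bigr => p _.
by rewrite /dil_act /phiBH /= pmod_scale.
Qed.

Lemma dil_gen h m : in_smash cop pa m -> in_dil cop pa (dil_act h (phiBH cop pa m)).
Proof.
move=> hm; exists [:: (h, m)]; split => //=.
by apply: functional_extensionality => g; apply: functional_extensionality => l; rewrite big_seq1.
Qed.

Lemma dil_dact h F : in_dil cop pa F -> in_dil cop pa (dil_act h F).
Proof.
case=> s [hs ->]; exists (map (fun p => (h * p.1, p.2)) s); split.
  by apply: allProp_map hs.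
apply: functional_extensionality => g; apply: functional_extensionality => l.
by rewrite /dil_act big_map; apply: eq_bigr => p _ /=; rewrite mulrA.
Qed.

Lemma Phi_sum (I : Type) (r : seq I) (G : I -> H -> TBH H B) :
  Phi (fun g l => \sum_(i <- r) G i g l) = fun l g => \sum_(i <- r) Phi (G i) l g.
Proof.
apply: functional_extensionality => l; apply: functional_extensionality => g.
by rewrite /Phi sw_sum.
Qed.

Lemma phiBH_sum (I : Type) (r : seq I) (m : I -> TBH H B) :
  phiBH cop pa (fun l => \sum_(i <- r) m i l) = fun g l => \sum_(i <- r) phiBH cop pa (m i) g l.
Proof.
apply: functional_extensionality => g; apply: functional_extensionality => l.
by rewrite /phiBH /pmodBH -sw_sum; apply: sw_ext => x y; rewrite (kl_sum _ _ (hpr _)).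
Qed.

Lemma Phi_lin a F1 F2 : Phi (dil_lin a F1 F2) = BbH_lin a (Phi F1) (Phi F2).
Proof.
apply: functional_extensionality => l; apply: functional_extensionality => g.
by rewrite /Phi /dil_lin /BbH_lin sw_add sw_scale.
Qed.

Lemma Phi_zero : Phi dzero = @BbH_zero _ H B.
Proof.
apply: functional_extensionality => l; apply: functional_extensionality => g.
by rewrite /Phi /dzero sw_zero.
Qed.

Lemma BbarH_Phi F : in_dil cop pa F -> in_BbarH pa (Phi F).
Proof.
case=> s [hs ->].
rewrite (Phi_sum s (fun p => dil_act p.1 (phiBH cop pa p.2))).
apply: (subspB_sum subspB_BbarH hs) => p hp.
rewrite Phi_act; last by apply: good_phiBH; exact: good_smash.
apply: BbarH_sact; case: hp => s' ->.
rewrite (phiBH_sum s' (fun q => smash_elt cop pa q.1 q.2)).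
rewrite (Phi_sum s' (fun q => phiBH cop pa (smash_elt cop pa q.1 q.2))).
apply: (subspB_sum (Q := fun _ => True) subspB_BbarH); first exact: allProp_all.
by move=> q _; rewrite Phi_gen; exact: BbarH_Xsm.
Qed.

Inductive Cset : TBbH H B -> Prop :=
 | C0 : Cset (@BbH_zero _ H B)
 | Cgen b x : Cset (Gen b x)
 | Clin a T1 T2 : Cset T1 -> Cset T2 -> Cset (BbH_lin a T1 T2)
 | Cact h T : Cset T -> Cset (smash_act cop h T).

Lemma BbarH_C T : Cset T -> in_BbarH pa T.
Proof.
elim => [||a T1 T2 _ h1 _ h2|h T' _ hT].
- exact: subspB_BbarH.1.
- move=> b x; apply: subspB_sub; [exact: subspB_BbarH | apply: BbarH_pure; exact: Bbar_phiB | exact: BbarH_Xsm].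
- exact: subspB_BbarH.2.
- exact: BbarH_sact.
Qed.

Definition Sm T := exists F c, in_dil cop pa F /\ Cset c /\ T = BbH_add (Phi F) c.

Lemma subspB_Sm : subspB Sm.
Proof.
split.
  exists dzero, (@BbH_zero _ H B); split; first exact: subspD_dil.1.
  split; first exact: C0.
  rewrite Phi_zero; apply: functional_extensionality => l; apply: functional_extensionality => g.
  by rewrite /BbH_add /BbH_zero addr0.
move=> a T1 T2 [F1 [c1 [hF1 [hc1 ->]]]] [F2 [c2 [hF2 [hc2 ->]]]].
exists (dil_lin a F1 F2), (BbH_lin a c1 c2); split; first exact: subspD_dil.2.
split; first exact: Clin.
rewrite Phi_lin; apply: functional_extensionality => l; apply: functional_extensionality => g.
by rewrite /BbH_add /BbH_lin scalerDr addrACA.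
Qed.

Lemma sact_add h (T1 T2 : TBbH H B) : smash_act cop h (BbH_add T1 T2) = BbH_add (smash_act cop h T1) (smash_act cop h T2).
Proof.
apply: functional_extensionality => l; apply: functional_extensionality => g.
by rewrite /smash_act /BbH_add /glob_act sw_add.
Qed.

Lemma Sm_act h T : Sm T -> Sm (smash_act cop h T).
Proof.
case=> F [c [hF [hc ->]]]; exists (dil_act h F), (smash_act cop h c); split; first exact: dil_dact.
split; first exact: Cact.
by rewrite sact_add Phi_act //; exact: good_dil.
Qed.

Lemma Sm_pure b x : Sm (pureBbH (phiB pa b) x).
Proof.
exists (phiBH cop pa (smash_elt cop pa b x)), (Gen b x); split.
  have := @dil_gen 1 (smash_elt cop pa b x).
  have -> : dil_act 1 (phiBH cop pa (smash_elt cop pa b x)) = phiBH cop pa (smash_elt cop pa b x).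
    by apply: functional_extensionality => g; rewrite /dil_act mulr1.
  apply; exists [:: (b, x)]; apply: functional_extensionality => l; by rewrite big_seq1.
split; first exact: Cgen.
rewrite Phi_gen; apply: functional_extensionality => l; apply: functional_extensionality => g.
by rewrite /BbH_add /Gen addrC subrK.
Qed.

Lemma sum_id (f : H -> B) h x : klinear f ->
  pureBbH (glob_act h f) x = fun l g => sw cop h (fun a c => smash_act cop a (pureBbH f (S c * x)) l g).
Proof.
move=> hf; apply: functional_extensionality => l; apply: functional_extensionality => g.
rewrite /smash_act /glob_act /pureBbH /=; symmetry.
transitivity (sw cop h (fun a c => sw cop a (fun a' c' => l (c' * S c * x) *: f (g * a')))).
  by apply: sw_ext => a c; apply: sw_ext => a' c'; rewrite /lmf /= mulrA.
rewrite coassocC; last by kl3.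
transitivity (sw cop h (fun a c => cou c *: (l x *: f (g * a)))).
  apply: sw_ext => a c.
  rewrite (sw_klin cop c (fun a'' c'' => a'' * S c'') (f := fun z => l (z * x) *: f (g * a))); last by kl.
  by rewrite (antip_right hH) -scalerAl mul1r linearZ /= -scalerA.
have hl : klinear (fun z => l x *: f (g * z)) by kl.
rewrite -[in RHS](cou_right hH h) -(sw_klin cop h (fun a c => cou c *: a) hl).
by apply: sw_ext => a c; rewrite (klZ hl).
Qed.

Lemma Sm_all T : in_BbarH pa T -> Sm T.
Proof.
case=> s [hs ->]; apply: (subspB_sum subspB_Sm hs) => p; case: p => f x /=; case=> r ->.
have -> : pureBbH (fun g => \sum_(i <- r) glob_act i.1 (phiB pa i.2) g) x =
          (fun l g => \sum_(i <- r) pureBbH (glob_act i.1 (phiB pa i.2)) x l g).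
  apply: functional_extensionality => l; apply: functional_extensionality => g.
  by rewrite /pureBbH scaler_sumr.
apply: (subspB_sum (Q := fun _ => True) subspB_Sm); first exact: allProp_all.
move=> i _; rewrite sum_id; last by rewrite /phiB; kl.
rewrite /sw; apply: (subspB_sum (Q := fun _ => True) subspB_Sm (G := fun q => smash_act cop q.1 (pureBbH (phiB pa i.2) (S q.2 * x)))); first exact: allProp_all.
by move=> q _; apply: Sm_act; exact: Sm_pure.
Qed.


Definition tensor (s : seq (B * H)) : TBH H B := fun l => \sum_(p <- s) pureBH p.1 p.2 l.
Definition Erep (s : seq (B * H)) : TBH H B := fun l => \sum_(p <- s) smash_elt cop pa p.1 p.2 l.
Definition ER (t e : TBH H B) := exists s, t = tensor s /\ e = Erep s.

Lemma smash_bil l : kbilinear (fun (x : H) (b : B) => smash_elt cop pa b x l).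
Proof. by split => ?; rewrite /smash_elt /pureBH; kl. Qed.

Lemma ER_fun t e1 e2 : ER t e1 -> ER t e2 -> e1 = e2.
Proof.
move=> [s1 [-> ->]] [s2 [e ->]]; apply: functional_extensionality => l.
pose s := s1 ++ map (fun p => (- p.1, p.2)) s2.
have hs : forall l' : dualH H, \sum_(p <- s) l' p.2 *: p.1 = 0.
  move=> l'; have := congr1 (fun t => t l') e; rewrite /tensor /pureBH /= => e'.
  by rewrite /s big_cat big_map /= e' -big_split /= big1 // => p _; rewrite scalerN addrN.
have := Wlem hs (smash_bil l); rewrite /s big_cat big_map /= /Erep => h.
have h2 : \sum_(j <- s2) smash_elt cop pa (- j.1) j.2 l = - \sum_(j <- s2) smash_elt cop pa j.1 j.2 l.
  by rewrite -sumrN; apply: eq_bigr => p _; rewrite (klN ((smash_bil l).2 p.2)).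
by apply/eqP; rewrite -subr_eq0 -h2 h.
Qed.

Lemma ER_lin a t1 e1 t2 e2 : ER t1 e1 -> ER t2 e2 ->
  ER (fun l => a *: t1 l + t2 l) (fun l => a *: e1 l + e2 l).
Proof.
move=> [s1 [-> ->]] [s2 [-> ->]].
exists (map (fun p => (a *: p.1, p.2)) s1 ++ s2); split;
  apply: functional_extensionality => l; rewrite /tensor /Erep big_cat big_map scaler_sumr;
  congr (_ + _); apply: eq_bigr => p _ /=.
  by rewrite /pureBH !scalerA mulrC.
by rewrite (klZ ((smash_bil l).2 p.2)).
Qed.

Lemma ER_zero : ER (fun _ => 0) (fun _ => 0).
Proof.
by exists [::]; split; apply: functional_extensionality => l; rewrite /tensor /Erep big_nil.
Qed.

Lemma ER_sum (I : Type) (Q : I -> Prop) (r : seq I) (T E : I -> TBH H B) :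
  allProp Q r -> (forall i, Q i -> ER (T i) (E i)) ->
  ER (fun l => \sum_(i <- r) T i l) (fun l => \sum_(i <- r) E i l).
Proof.
move=> hr hTE; elim: r hr => [|i r IH] /= hr.
  have -> : (fun l => \sum_(i <- [::]) T i l) = fun _ => 0.
    by apply: functional_extensionality => l; rewrite big_nil.
  have -> : (fun l => \sum_(i <- [::]) E i l) = fun _ => 0.
    by apply: functional_extensionality => l; rewrite big_nil.
  exact: ER_zero.
case: hr => hi hr.
have -> : (fun l => \sum_(j <- i :: r) T j l) = fun l => 1 *: T i l + \sum_(j <- r) T j l.
  by apply: functional_extensionality => l; rewrite big_cons scale1r.
have -> : (fun l => \sum_(j <- i :: r) E j l) = fun l => 1 *: E i l + \sum_(j <- r) E j l.
  by apply: functional_extensionality => l; rewrite big_cons scale1r.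
by apply: ER_lin; [exact: hTE | exact: IH].
Qed.

Lemma ER_base b x : ER (pureBH b x) (smash_elt cop pa b x).
Proof.
by exists [:: (b, x)]; split; apply: functional_extensionality => l; rewrite /tensor /Erep big_seq1.
Qed.

Lemma I4 b x l : sw cop x (fun a c => smash_elt cop pa (b * pa a 1) c l) = smash_elt cop pa b x l.
Proof.
rewrite /smash_elt /pureBH.
rewrite -(coassocC (g := fun a a' c' => l c' *: (b * pa a 1 * pa a' 1))); last by kl3.
apply: sw_ext => m c'.
transitivity (sw cop m (fun a a' => l c' *: (b * (pa a 1 * pa a' 1)))); first by apply: sw_ext => ? ?; rewrite mulrA.
rewrite (sw_klin cop m (fun a a' => pa a 1 * pa a' 1) (f := fun z => l c' *: (b * z))); last by kl.
by rewrite -(pa_mul hpa) mulr1.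
Qed.

Lemma ER_idem b x : ER (smash_elt cop pa b x) (smash_elt cop pa b x).
Proof.
have e1 : smash_elt cop pa b x = fun l => \sum_(q <- cop x) pureBH (b * pa q.1 1) q.2 l by [].
have e2 : smash_elt cop pa b x = fun l => \sum_(q <- cop x) smash_elt cop pa (b * pa q.1 1) q.2 l.
  by apply: functional_extensionality => l; rewrite -I4.
rewrite {1}e1 {1}e2; apply: (ER_sum (Q := fun _ => True)); first exact: allProp_all.
by move=> q _; exact: ER_base.
Qed.

Lemma EC g b x l : sw cop g (fun a c => smash_elt cop pa (pa a b) (c * x) l) = pmodBH cop pa g (smash_elt cop pa b x) l.
Proof.
rewrite /smash_elt /pureBH /pmodBH.
transitivity (sw cop g (fun a c => sw cop c (fun u v => sw cop x (fun y z => l (v * z) *: (pa a b * pa (u * y) 1))))).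
  apply: sw_ext => a c.
  have bl : kbilinear (fun a' c' => l c' *: (pa a b * pa a' 1)) by kl2.
  by rewrite (cop_mul hH bl c x).
rewrite -(coassocC (g := fun a u v => sw cop x (fun y z => l (v * z) *: (pa a b * pa (u * y) 1)))); last by kl3.
apply: sw_ext => w v.
rewrite -(sw_klin _ _ _ (hpr w)); rewrite /lmf /=.
transitivity (sw cop x (fun y z => l (v * z) *: sw cop w (fun m q => pa m b * pa (q * y) 1))).
  by rewrite sw_comm; apply: sw_ext => y z; rewrite -sw_scale.
apply: sw_ext => y z; rewrite (klZ (hpr w)) (pa_mul hpa); congr (_ *: _).
transitivity (sw cop w (fun a u => sw cop u (fun p q => pa a b * pa p 1 * pa (q * y) 1))); last first.
  apply: sw_ext => a u.
  rewrite (pa_compl hpa) -(sw_klin cop u (fun p q => pa p 1 * pa (q * y) 1) (f := fun t => pa a b * t)); last by kl.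
  by apply: sw_ext => p q; rewrite mulrA.
rewrite -(coassocC (g := fun a p q => pa a b * pa p 1 * pa (q * y) 1)); last by kl3.
apply: sw_ext => m q.
rewrite (sw_klin cop m (fun a p => pa a b * pa p 1) (f := fun t => t * pa (q * y) 1)); last by kl.
by rewrite -(pa_mul hpa) mulr1.
Qed.


Lemma ER_act g t e : ER t e -> ER (pmodBH cop pa g t) (pmodBH cop pa g e).
Proof.
move=> [s [-> ->]].
have e1 : pmodBH cop pa g (tensor s) =
   fun l => \sum_(p <- s) sw cop g (fun a c => pureBH (pa a p.1) (c * p.2) l).
  apply: functional_extensionality => l; rewrite /pmodBH /tensor /pureBH -sw_sum.
  apply: sw_ext => a c; rewrite (kl_sum _ _ (hpr a)); apply: eq_bigr => p _.
  by rewrite (klZ (hpr a)).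
have e2 : pmodBH cop pa g (Erep s) =
   fun l => \sum_(p <- s) sw cop g (fun a c => smash_elt cop pa (pa a p.1) (c * p.2) l).
  apply: functional_extensionality => l.
  transitivity (\sum_(p <- s) pmodBH cop pa g (smash_elt cop pa p.1 p.2) l).
    rewrite /pmodBH /Erep -sw_sum; apply: sw_ext => a c.
    by rewrite (kl_sum _ _ (hpr a)).
  by apply: eq_bigr => p _; rewrite -EC.
rewrite e1 e2; apply: (ER_sum (Q := fun _ => True)
   (T := fun p l => sw cop g (fun a c => pureBH (pa a p.1) (c * p.2) l))
   (E := fun p l => sw cop g (fun a c => smash_elt cop pa (pa a p.1) (c * p.2) l))); first exact: allProp_all.
move=> p _; apply: (ER_sum (Q := fun _ => True) (r := cop g)
   (T := fun q => pureBH (pa q.1 p.1) (q.2 * p.2))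
   (E := fun q => smash_elt cop pa (pa q.1 p.1) (q.2 * p.2))); first exact: allProp_all.
by move=> q _; exact: ER_base.
Qed.

Lemma psi_pure b x : psi (pureBbH (phiB pa b) x) = phiBH cop pa (pureBH b x).
Proof.
apply: functional_extensionality => g; apply: functional_extensionality => l.
rewrite /psi /phiBH /pmodBH /pureBbH /pureBH /phiB; apply: sw_ext => a c.
by rewrite (klZ (hpr a)).
Qed.

Lemma C_ER T : Cset T -> forall g, ER (psi T g) (fun _ => 0).
Proof.
elim => [||a T1 T2 _ IH1 _ IH2|h T' hT IH] .
- move=> g.
  have -> : psi (@BbH_zero _ H B) g = fun _ => 0.
    by apply: functional_extensionality => l; rewrite /psi /BbH_zero sw_zero.
  exact: ER_zero.
- move=> b x g.
  have -> : psi (Gen b x) g = fun l => (-1) *: pmodBH cop pa g (smash_elt cop pa b x) l + pmodBH cop pa g (pureBH b x) l.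
    apply: functional_extensionality => l.
    have -> : pmodBH cop pa g (smash_elt cop pa b x) l = psi (Xsm b x) g l by rewrite psi_Xsm.
    have -> : pmodBH cop pa g (pureBH b x) l = psi (pureBbH (phiB pa b) x) g l by rewrite psi_pure.
    by rewrite /psi /Gen scaleN1r addrC -sw_opp -sw_add.
  have -> : (fun _ : dualH H => (0 : B)) = fun l => (-1) *: pmodBH cop pa g (smash_elt cop pa b x) l + pmodBH cop pa g (smash_elt cop pa b x) l.
    by apply: functional_extensionality => l; rewrite scaleN1r addNr.
  by apply: ER_lin; apply: ER_act; [exact: ER_idem | exact: ER_base].
- move=> g.
  have -> : psi (BbH_lin a T1 T2) g = fun l => a *: psi T1 g l + psi T2 g l.
    by apply: functional_extensionality => l; rewrite /psi /BbH_lin sw_add sw_scale.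
  have -> : (fun _ : dualH H => (0 : B)) = fun l => a *: (fun _ => (0 : B)) l + (fun _ => (0 : B)) l.
    by apply: functional_extensionality => l; rewrite scaler0 addr0.
  exact: ER_lin.
- move=> g; rewrite psi_act; last by apply: good_BbarH; exact: BbarH_C.
  exact: IH.
Qed.

Lemma dil_ER F : in_dil cop pa F -> forall g, ER (F g) (F g).
Proof.
case=> s [hs ->] g /=.
apply: (ER_sum (T := fun p => dil_act p.1 (phiBH cop pa p.2) g) (E := fun p => dil_act p.1 (phiBH cop pa p.2) g) hs).
move=> p [s' e]; rewrite /dil_act /phiBH; apply: ER_act; rewrite e.
apply: (ER_sum (Q := fun _ => True) (T := fun q => smash_elt cop pa q.1 q.2) (E := fun q => smash_elt cop pa q.1 q.2)).
  exact: allProp_all.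
by move=> q _; exact: ER_idem.
Qed.

Lemma inter F : in_dil cop pa F -> Cset (Phi F) -> Phi F = @BbH_zero _ H B.
Proof.
move=> hF hC.
suff -> : F = dzero by exact: Phi_zero.
apply: functional_extensionality => g.
apply: (ER_fun (dil_ER hF g)).
by have := C_ER hC g; rewrite psiPhi //; exact: good_dil.
Qed.

Lemma Phi_inj F1 F2 : in_dil cop pa F1 -> in_dil cop pa F2 -> Phi F1 = Phi F2 -> F1 = F2.
Proof.
move=> h1 h2 e.
by rewrite -(psiPhi (good_dil h1)) e psiPhi //; exact: good_dil.
Qed.

Lemma main_iso : iso_to_direct_summand cop pa Phi Cset.
Proof.
split; first by move=> a F1 F2 _ _; exact: Phi_lin.
split; first by move=> h F hF; apply: Phi_act; exact: good_dil.
split; first exact: Phi_inj.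
split; first exact: BbarH_Phi.
split; first exact: BbarH_C.
split; first exact: C0.
split; first exact: Clin.
split; first exact: Cact.
split; first exact: inter.
move=> T hT; exact: Sm_all.
Qed.
End Main.

Unset Implicit Arguments.
Theorem mainTheorem17 (k : fieldType) (H B : algType k)
  (cop : H -> seq (H * H)) (cou : H -> k) (S : H -> H) (pa : H -> B -> B) :
  is_hopf cop cou S ->
  sym_partial_action cop pa ->
  exists (Phi : (H -> TBH H B) -> TBbH H B) (C : TBbH H B -> Prop),
    iso_to_direct_summand cop pa Phi C.
Proof.
move=> hH hpa; case: (antip_bij hH) => Si hSi1 hSi2.
by eexists; eexists; exact: (main_iso hH hpa hSi1 hSi2).
Qed.
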